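(* Let $\theta$ be a positive integer, let $\lambda\in\mathbb{R}\setminus\{0\}$, and let $G$ be a baseline cumulative distribution function. Let $N_1,\dots,N_\theta$ be i.i.d. geometric random variables with $P(N_i=n)=p(1-p)^{n-1}$, $n=1,2,\dots$, for some $p\in(0,1]$. For each $i=1,\dots,\theta$ let $T_{i1},T_{i2},\dots$ be i.i.d. random variables with the Poisson-G distribution, i.e. with survival function $$\bar G^{PG}(t;\lambda)=\frac{e^{-\lambda G(t)}-e^{-\lambda}}{1-e^{-\lambda}},$$ where all the $T_{ij}$ and all the $N_i$ are mutually independent. Put $W_i=\min(T_{i1},\dots,T_{iN_i})$ and $V_i=\max(T_{i1},\dots,T_{iN_i})$. Then: (i) if $0<\alpha\le 1$ and $p=\alpha$, the random variable $\min_{1\le i\le\theta} W_i$ has the $\mathrm{GMOP\text{-}G}(\theta,\alpha,\lambda)$ distribution; (ii) if $\alpha>1$ and $p=1/\alpha$, the random variable $\min_{1\le i\le\theta} V_i$ has the $\mathrm{GMOP\text{-}G}(\theta,\alpha,\lambda)$ distribution.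
   Context: The generalized Marshall–Olkin Poisson-G distribution $\mathrm{GMOP\text{-}G}(\theta,\alpha,\lambda)$ with baseline cdf $G$, parameters $\theta>0$, $\alpha>0$ (write $\bar\alpha=1-\alpha$) and $\lambda\in\mathbb{R}\setminus\{0\}$, is the distribution with survival function $$\bar F(t;\theta,\alpha,\lambda)=\left[\frac{\alpha\left(e^{-\lambda G(t)}-e^{-\lambda}\right)}{1-\alpha e^{-\lambda}-\bar\alpha e^{-\lambda G(t)}}\right]^{\theta}.$$ *)

(* Defs.v *)
From HB Require Import structures.
From mathcomp Require Import all_boot all_order all_algebra.
From mathcomp Require Import all_classical all_reals all_analysis.
Set Implicit Arguments. Unset Strict Implicit. Unset Printing Implicit Defensive.
Import Order.TTheory GRing.Theory Num.Theory.
Import numFieldNormedType.Exports.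
Local Open Scope classical_set_scope.
Local Open Scope ring_scope.

Definition is_cdf (R : realType) (G : R -> R) : Prop :=
  [/\ {homo G : x y / x <= y},
      (forall x, G @ at_right x --> G x),
      G @ -oo --> (0 : R) &
      G @ +oo --> (1 : R)].

Definition mutually_independent d (T : measurableType d) (R : realType)
  (P : probability T R) (I : Type) (F : I -> set (set T)) : Prop :=
  forall (n : nat) (k : 'I_n -> I), injective k ->
  forall E : 'I_n -> set T, (forall m, F (k m) (E m)) ->
  P (\bigcap_(m in [set: 'I_n]) E m) = (\prod_(m < n) P (E m))%E.

Definition events_nat d (T : measurableType d) (X : T -> nat) : set (set T) :=
  [set X @^-1` A | A in [set: set nat]].

Definition events_real d (T : measurableType d) (R : realType) (X : T -> R)
  : set (set T) :=
  [set X @^-1` B | B in [set B : set R | measurable B]].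

(* min / max of X_0, ..., X_{N-1} (N >= 1 almost surely; for N = 0 these
   default to X_0, an event of probability zero) *)
Definition min_upto (R : realType) (X : nat -> R) (N : nat) : R :=
  \big[Num.min/X 0%N]_(j < N) X j.
Definition max_upto (R : realType) (X : nat -> R) (N : nat) : R :=
  \big[Num.max/X 0%N]_(j < N) X j.

Definition PG_surv (R : realType) (G : R -> R) (lambda t : R) : R :=
  (expR (- lambda * G t) - expR (- lambda)) / (1 - expR (- lambda)).

Definition GMOP_surv (R : realType) (G : R -> R) (theta : nat)
  (alpha lambda t : R) : R :=
  ((alpha * (expR (- lambda * G t) - expR (- lambda))) /
   (1 - alpha * expR (- lambda) - (1 - alpha) * expR (- lambda * G t)))
  ^+ theta.

(* Main.v *)
Require Import Defs.
From HB Require Import structures.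
From mathcomp Require Import all_boot all_order all_algebra.
From mathcomp Require Import all_classical all_reals all_analysis.
Import Order.TTheory GRing.Theory Num.Theory.
Import numFieldNormedType.Exports.
Local Open Scope classical_set_scope.
Local Open Scope ring_scope.
From mathcomp Require Import ring lra.
Section Indep.
Variables (R : realType) (d : measure_display) (Omega : measurableType d)
  (P : probability Omega R) (theta : nat)
  (N : 'I_theta -> Omega -> nat) (X : 'I_theta -> nat -> Omega -> R).

Definition Idx := ('I_theta + ('I_theta * nat))%type.
Definition Fam (k : Idx) : set (set Omega) :=
  match k with
  | inl i => events_nat (N i)
  | inr ij => events_real (X ij.1 ij.2)
  end.

Hypothesis indep : mutually_independent P Fam.

Lemma indep_seq (s : seq Idx) (Ev : Idx -> set Omega) :
  uniq s -> (forall x, x \in s -> Fam x (Ev x)) ->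
  P (\bigcap_(x in [set x | x \in s]) Ev x) = (\prod_(x <- s) P (Ev x))%E.
Proof.
case: s => [|x0 s'] us hF.
  rewrite big_nil.
  have -> : \bigcap_(x in [set x | x \in [::]]) Ev x = setT.
    by apply/seteqP; split => // w _ x /=; rewrite in_nil.
  exact: probability_setT.
set s := x0 :: s' in us hF *.
have inj : injective (fun m : 'I_(size s) => nth x0 s m).
  move=> m1 m2 /eqP; rewrite nth_uniq // => /eqP; exact: val_inj.
have := @indep _ _ inj (fun m => Ev (nth x0 s m)).
move=> /(_ (fun m => hF _ (mem_nth x0 (ltn_ord m)))) H.
have -> : \bigcap_(x in [set x | x \in s]) Ev x =
          \bigcap_(m in [set: 'I_(size s)]) Ev (nth x0 s m).
  apply/seteqP; split => w /= Hw.
    move=> m _; apply: Hw; exact: mem_nth.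
  move=> x xs; have xs' : (index x s < size s)%N by rewrite index_mem.
  have := Hw (Ordinal xs') I.
  by rewrite /= nth_index.
rewrite H (big_nth x0) big_mkord //.
Qed.
End Indep.
Arguments Fam {R d Omega theta} N X k.
Arguments indep_seq {R d Omega P theta N X} indep s Ev.
Section Base.
Variables (R : realType) (d : measure_display) (Omega : measurableType d)
  (P : probability Omega R) (theta : nat)
  (N : 'I_theta -> Omega -> nat) (X : 'I_theta -> nat -> Omega -> R).
Hypothesis indep : mutually_independent P (Fam N X).

Definition Basic (U : set R) i a b : set Omega :=
  N i @^-1` [set a] `&` \bigcap_(j in [set j | (j < b)%N]) (X i j @^-1` U).

Lemma base_indep U (mU : measurable U) s (pN : nat -> R)
  (hs : forall i j, P (X i j @^-1` U) = s%:E)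
  (hpN : forall i a, P (N i @^-1` [set a]) = (pN a)%:E)
  (a b : 'I_theta -> nat) :
  P (\bigcap_(i in [set: 'I_theta]) Basic U i (a i) (b i)) =
  (\prod_(i < theta) (pN (a i) * s ^+ b i))%:E.
Proof.
pose B := (\max_(i < theta) b i).
have bB : forall i, (b i <= B)%N by move=> i; exact: (leq_bigmax i).
pose f := fun ij : 'I_theta * 'I_B => (inr (ij.1, val ij.2) : Idx theta).
pose sq := map inl (index_enum 'I_theta) ++ map f (index_enum _).
pose Ev := fun x : Idx theta => match x with
  | inl i => N i @^-1` [set a i]
  | inr ij => if (ij.2 < b ij.1)%N then X ij.1 ij.2 @^-1` U else setT end.
have us : uniq sq.
  rewrite cat_uniq; apply/and3P; split.
  - by rewrite map_inj_uniq ?index_enum_uniq // => i1 i2 [].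
  - apply/hasPn => x /mapP [ij _ ->]; apply/negP => /mapP [i _] //.
  - rewrite map_inj_uniq ?index_enum_uniq //.
    by move=> [i1 j1] [i2 j2] [-> /val_inj ->].
have hF : forall x, x \in sq -> Fam N X x (Ev x).
  case=> [i|[i j]] _ /=; first by exists [set a i].
  case: ifP => _; first by exists U.
  by exists setT => //; exact: measurableT.
have := indep_seq indep sq Ev us hF.
have -> : \bigcap_(x in [set x | x \in sq]) Ev x =
          \bigcap_(i in [set: 'I_theta]) Basic U i (a i) (b i).
  apply/seteqP; split => w /= Hw.
    move=> i _; split.
      by apply: (Hw (inl i)); rewrite /= mem_cat map_f ?mem_index_enum.
    move=> j /= jb; have jB : (j < B)%N by apply: leq_trans (bB i).
    have := Hw (inr (i, j)); rewrite /= jb; apply.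
    rewrite /= mem_cat; apply/orP; right.
    by apply/mapP; exists (i, Ordinal jB); rewrite ?mem_index_enum.
  case=> [i|[i j]] _ /=; first by case: (Hw i I).
  by case: ifP => // jb; case: (Hw i I) => _; apply.
move=> ->.
pose val := fun x : Idx theta => match x with
  | inl i => pN (a i)
  | inr ij => if (ij.2 < b ij.1)%N then s else 1 end.
rewrite (eq_bigr (fun x => (val x)%:E)); last first.
  case=> [i|[i j]] _ /=; first exact: hpN.
  by case: ifP => _; rewrite ?hs ?probability_setT.
rewrite prodEFin big_cat !big_map /=; congr EFin.
rewrite big_split /=; congr (_ * _).
rewrite -(pair_big xpredT xpredT (fun i (j : 'I_B) => if (j < b i)%N then s else 1)) /=.
apply: eq_bigr => i _.
rewrite -(big_mkord xpredT (fun j => if (j < b i)%N then s else 1)).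
rewrite (@big_cat_nat _ _ _ (b i)) ?bB //=.
rewrite [X in _ * X = _]big1_seq ?mulr1; last first.
  by move=> j; rewrite mem_index_iota => /and3P [_ H _]; rewrite ltnNge H.
rewrite (eq_big_nat _ _ (F2 := fun _ => s)); last first.
  by move=> j /andP [_ ->].
by rewrite prodr_const_nat subn0.
Qed.
End Base.
Arguments Basic {R d Omega theta} N X U i a b.
Arguments base_indep {R d Omega P theta N X} indep U mU s pN hs hpN a b.
Section Induct.
Variables (R : realType) (d : measure_display) (Omega : measurableType d)
  (P : probability Omega R) (theta : nat)
  (N : 'I_theta -> Omega -> nat) (X : 'I_theta -> nat -> Omega -> R).
Hypothesis indep : mutually_independent P (Fam N X).
Hypothesis hN : forall i (n : nat), measurable (N i @^-1` [set n]).
Hypothesis hX : forall i j, measurable_fun setT (X i j).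
Variables (U : set R) (s q : R) (pN : nat -> R) (E : 'I_theta -> set Omega).
Hypothesis mU : measurable U.
Hypothesis hs : forall i j, P (X i j @^-1` U) = s%:E.
Hypothesis hpN : forall i a, P (N i @^-1` [set a]) = (pN a)%:E.
Hypothesis hE : forall i, measurable (E i).
Hypothesis Hblk : forall i (Z : set Omega) (K : R), measurable Z ->
  (forall a b, P (Z `&` Basic N X U i a b) = (K * (pN a * s ^+ b))%:E) ->
  P (Z `&` E i) = (K * q)%:E.

Lemma mpre i j (B : set R) : measurable B -> measurable (X i j @^-1` B).
Proof. by move=> mB; rewrite -(setTI (_ @^-1` _)); exact: hX. Qed.

Lemma mBasic i a b : measurable (Basic N X U i a b).
Proof.
apply: measurableI => //; apply: bigcap_measurableType => j _; exact: mpre.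
Qed.

Definition Lset k (a b : 'I_theta -> nat) :=
  \bigcap_(i in [set i : 'I_theta | (i < k)%N]) E i `&`
  \bigcap_(i in [set i : 'I_theta | (k <= i)%N]) Basic N X U i (a i) (b i).

Lemma Lk k : (k <= theta)%N -> forall a b, P (Lset k a b) =
  (q ^+ k * \prod_(i < theta | (k <= i)%N) (pN (a i) * s ^+ b i))%:E.
Proof.
elim: k => [_|k IH kt] a b.
  rewrite expr0 mul1r.
  have -> : Lset 0 a b = \bigcap_(i in [set: 'I_theta]) Basic N X U i (a i) (b i).
    by apply/seteqP; split => w /=; [move=> [_ H] i _; apply: H|
      move=> H; split => // i _; apply: H].
  exact: base_indep.
have kt' : (k < theta)%N by [].
pose kk := Ordinal kt'.
pose Z := \bigcap_(i in [set i : 'I_theta | (i < k)%N]) E i `&`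
  \bigcap_(i in [set i : 'I_theta | (k < i)%N]) Basic N X U i (a i) (b i).
have -> : Lset k.+1 a b = Z `&` E kk.
  apply/seteqP; split => w /=.
    move=> [H1 H2]; split; [split|].
    - by move=> i /= ik; apply: H1 => /=; rewrite ltnS ltnW.
    - by move=> i /= ki; apply: H2.
    - by apply: H1 => /=.
  move=> [[H1 H2] H3]; split => // i /= ik.
  rewrite ltnS leq_eqVlt in ik; case/orP: ik => [/eqP ik|ik]; last exact: H1.
  by have -> : i = kk by apply: val_inj.
have mZ : measurable Z.
  apply: measurableI.
    apply: fin_bigcap_measurable; [exact: finite_finset | move=> i _; exact: hE].
  apply: fin_bigcap_measurable; [exact: finite_finset | move=> i _; exact: mBasic].
pose Rest := \prod_(i < theta | (k < i)%N) (pN (a i) * s ^+ b i).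
rewrite (@Hblk kk Z (q ^+ k * Rest) mZ).
  by rewrite exprSr mulrAC.
move=> a' b'.
pose a2 := fun i => if i == kk then a' else a i.
pose b2 := fun i => if i == kk then b' else b i.
have -> : Z `&` Basic N X U kk a' b' = Lset k a2 b2.
  apply/seteqP; split => w /=.
    move=> [[H1 H2] H3]; split => // i /= ki.
    rewrite /a2 /b2; case: eqP => [->//|/eqP ne]; apply: H2 => /=.
    by rewrite ltn_neqAle ki andbT; apply: contra ne => /eqP e; apply/eqP/val_inj.
  move=> [H1 H2]; split; [split|] => //.
    move=> i /= ki; have := H2 i (ltnW ki); rewrite /a2 /b2.
    by case: eqP => // e; move: ki; rewrite e /= ltnn.
  by have := H2 kk (leqnn k); rewrite /a2 /b2 eqxx.
rewrite IH ?(ltnW kt) //; congr EFin.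
rewrite (bigD1 kk) //= /a2 /b2 eqxx.
rewrite (eq_big (fun i : 'I_theta => (k < i)%N) (fun i => pN (a i) * s ^+ b i)).
- by rewrite /Rest -mulrA [X in _ * X]mulrC.
- move=> i; rewrite ltn_neqAle andbC; congr (_ && _).
  apply/idP/idP; apply: contra => /eqP e; apply/eqP.
  + by apply/val_inj; rewrite /= -e.
  + by rewrite e.
- move=> i /andP [_ ne]; by rewrite (negbTE ne).
Qed.

Lemma Lall : P (\bigcap_(i in [set: 'I_theta]) E i) = (q ^+ theta)%:E.
Proof.
have := @Lk theta (leqnn theta) (fun _ => 0%N) (fun _ => 0%N).
rewrite big1 ?mulr1; last by move=> i; rewrite leqNgt ltn_ord.
move=> <-; congr (P _).
apply/seteqP; split => w /=.
  by move=> H; split => // i /=; [move=> _; apply: H | rewrite leqNgt ltn_ord].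
by move=> [H _] i _; apply: H => /=.
Qed.
End Induct.
Section Series.
Variables (R : realType) (d : measure_display) (Omega : measurableType d)
  (P : probability Omega R).

Lemma series_meas (F : nat -> set Omega) (g : nat -> R) l :
  (forall i, measurable (F i)) -> trivIset setT F ->
  (forall i, P (F i) = (g i)%:E) -> series g @ \oo --> l ->
  P (\bigcup_i F i) = l%:E.
Proof.
move=> mF tF PF gl.
have h1 := @measure_sigma_additive _ _ _ P F mF tF.
have e : (fun n => \sum_(0 <= i < n) P (F i)) = EFin \o series g.
  apply/funext => n /=; rewrite /series /=.
  under eq_bigr do rewrite PF.
  by rewrite sumEFin.
rewrite e in h1.
have h2 : EFin \o series g @ \oo --> l%:E.
  apply: cvg_EFin; first by near=> n.
  exact: gl.
rewrite -(cvg_lim (@ereal_hausdorff R) h1); exact: (cvg_lim (@ereal_hausdorff R) h2).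
Unshelve. all: by end_near.
Qed.
End Series.
Section Block.
Variables (R : realType) (d : measure_display) (Omega : measurableType d)
  (P : probability Omega R) (theta : nat)
  (N : 'I_theta -> Omega -> nat) (X : 'I_theta -> nat -> Omega -> R).
Variables (U : set R) (s q : R) (pN : nat -> R) (i : 'I_theta) (E : set Omega).
Hypothesis hN : forall i (n : nat), measurable (N i @^-1` [set n]).
Hypothesis hX : forall i j, measurable_fun setT (X i j).
Hypothesis mU : measurable U.

Lemma block_gen (g : nat -> R) :
  measurable (N i @^-1` [set 0%N] `&` E) ->
  (forall m, measurable (N i @^-1` [set m.+1] `&` E)) ->
  (forall (Z : set Omega) K, measurable Z ->
     (forall a b, P (Z `&` Basic N X U i a b) = (K * (pN a * s ^+ b))%:E) ->
     forall m, P (Z `&` (N i @^-1` [set m.+1] `&` E)) = (K * g m)%:E) ->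
  pN 0 = 0 ->
  series g @ \oo --> q ->
  forall (Z : set Omega) K, measurable Z ->
  (forall a b, P (Z `&` Basic N X U i a b) = (K * (pN a * s ^+ b))%:E) ->
  P (Z `&` E) = (K * q)%:E.
Proof.
move=> m0 mS hg pN0 gq Z K mZ HZ.
pose F := fun m => Z `&` (N i @^-1` [set m] `&` E).
pose h := fun m => if m is m'.+1 then K * g m' else 0.
have -> : Z `&` E = \bigcup_m F m.
  apply/seteqP; split => w /=.
    by move=> [zw ew]; exists (N i w).
  by move=> [m _ [zw [_ ew]]].
apply: (@series_meas _ _ _ P F h).
- case=> [|m]; apply: measurableI => //; exact: mS.
- move=> m n _ _ [w [[_ [e1 _]] [_ [e2 _]]]].
  by rewrite /= in e1 e2; rewrite -e1 -e2.
- case=> [|m]; last exact: hg.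
  apply/eqP; rewrite eq_le measure_ge0 andbT /=.
  have sub : F 0%N `<=` Z `&` Basic N X U i 0 0.
    by move=> w [zw [e _]]; split => //; split => // j /=.
  have := HZ 0%N 0%N; rewrite pN0 mul0r mulr0 => <-.
  apply: le_measure sub.
  + by rewrite inE; apply: measurableI => //.
  + by rewrite inE; apply: measurableI => //; exact: (@mBasic _ _ _ _ _ _ hN hX _ mU).
- have := cvg_shiftS (series h) (nbhs (K * q)); move=> /= <-.
  have -> : (fun n => series h n.+1) = (fun n => K * series g n).
    apply/funext => n /=; rewrite /series /= big_nat_recl //= add0r.
    by rewrite big_distrr.
  apply: cvgM => //; exact: cvg_cst.
Qed.
End Block.
Section Spec.
Variables (R : realType) (d : measure_display) (Omega : measurableType d)
  (P : probability Omega R) (theta : nat)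
  (N : 'I_theta -> Omega -> nat) (X : 'I_theta -> nat -> Omega -> R).
Hypothesis hN : forall i (n : nat), measurable (N i @^-1` [set n]).
Hypothesis hX : forall i j, measurable_fun setT (X i j).
Variables (t s p : R).
Hypothesis hp : 0 < p <= 1.
Hypothesis hs : 0 <= s <= 1.
Definition pNd (a : nat) : R := if a is m.+1 then p * (1 - p) ^+ m else 0.

Lemma geo (c z : R) : `|z| < 1 -> series (fun m => c * z ^+ m) @ \oo --> c / (1 - z).
Proof. move=> hz; exact: cvg_geometric_series. Qed.

Lemma abs_lt1 : `|(1 - p) * s| < 1.
Proof.
case/andP: hp => p0 p1; case/andP: hs => s0 s1.
rewrite ger0_norm ?mulr_ge0 ?subr_ge0 //.
apply: (le_lt_trans (y := 1 - p)); last by rewrite ltrBlDr ltrDl.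
by rewrite -[leRHS]mulr1 ler_wpM2l ?subr_ge0.
Qed.

Lemma mUgt : measurable [set x : R | t < x].
Proof.
have -> : [set x : R | t < x] = [set` `]t, +oo[%R].
  by apply/seteqP; split => x; rewrite /= in_itv /= andbT.
exact: measurable_itv.
Qed.

Lemma mUle : measurable [set x : R | x <= t].
Proof.
have -> : [set x : R | x <= t] = [set` `]-oo, t]%R].
  by apply/seteqP; split => x; rewrite /= in_itv /=.
exact: measurable_itv.
Qed.

Lemma block_meas i (E : set Omega) :
  measurable (N i @^-1` [set 0%N] `&` E) ->
  (forall m, measurable (N i @^-1` [set m.+1] `&` E)) -> measurable E.
Proof.
move=> m0 mS.
have -> : E = \bigcup_m (N i @^-1` [set m] `&` E).
  apply/seteqP; split => w /=; first by move=> ew; exists (N i w).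
  by move=> [m _ [_ ew]].
by apply: bigcupT_measurable => -[|m].
Qed.

Lemma min_block i :
  let E := [set w | t < min_upto (fun j => X i j w) (N i w)] in
  measurable E /\
  forall (Z : set Omega) K, measurable Z ->
  (forall a b, P (Z `&` Basic N X [set x | t < x] i a b) = (K * (pNd a * s ^+ b))%:E) ->
  P (Z `&` E) = (K * (p * s / (1 - (1 - p) * s)))%:E.
Proof.
move=> E.
have e0 : N i @^-1` [set 0%N] `&` E = N i @^-1` [set 0%N] `&` (X i 0 @^-1` [set x | t < x]).
  apply/seteqP; split => w /= [e H]; split => //; move: H;
    by rewrite /E /= e /min_upto big_ord0.
have eS : forall m, N i @^-1` [set m.+1] `&` E = Basic N X [set x | t < x] i m.+1 m.+1.
  move=> m; apply/seteqP; split => w /= [e H]; split => //; move: H;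
    rewrite /E /= e /min_upto.
    move=> /bigmin_gtP [_ H] j /= jm; exact: (H (Ordinal jm)).
  move=> H; apply/bigmin_gtP; split; first exact: H.
  move=> j _; exact: (H j (ltn_ord j)).
have m0 : measurable (N i @^-1` [set 0%N] `&` E).
  rewrite e0; apply: measurableI => //; apply: (@mpre _ _ _ _ _ hX); exact: mUgt.
have mS : forall m, measurable (N i @^-1` [set m.+1] `&` E).
  move=> m; rewrite eS; apply: (@mBasic _ _ _ _ _ _ hN hX); exact: mUgt.
split; first exact: block_meas m0 mS.
apply: (@block_gen _ _ _ P _ N X _ s _ pNd i E hN hX mUgt
          (fun m => p * s * ((1 - p) * s) ^+ m)) => //.
- move=> Z K mZ HZ m; rewrite eS HZ; congr (EFin (_ * _)).
  by rewrite /pNd exprMn exprS; ring.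
- exact: (geo _ _ abs_lt1).
Qed.
Lemma max_block i :
  let E := [set w | t < max_upto (fun j => X i j w) (N i w)] in
  measurable E /\
  forall (Z : set Omega) K, measurable Z ->
  (forall a b, P (Z `&` Basic N X [set x | x <= t] i a b) = (K * (pNd a * s ^+ b))%:E) ->
  P (Z `&` E) = (K * (1 - p * s / (1 - (1 - p) * s)))%:E.
Proof.
move=> E.
have e0 : N i @^-1` [set 0%N] `&` E = N i @^-1` [set 0%N] `&` (X i 0 @^-1` [set x | t < x]).
  apply/seteqP; split => w /= [e H]; split => //; move: H;
    by rewrite /E /= e /max_upto big_ord0.
pose A m := Basic N X [set x | x <= t] i m.+1 0.
pose B m := Basic N X [set x | x <= t] i m.+1 m.+1.
have eS : forall m, N i @^-1` [set m.+1] `&` E = A m `\` B m.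
  move=> m; apply/seteqP; split => w /=.
    move=> [e H]; split; first by split => // j /=.
    move=> [_ Hall]; move: H; rewrite /E /= e /max_upto ltNge => /negP; apply.
    apply/bigmax_leP; split; first exact: (Hall 0%N).
    move=> j _; exact: (Hall j (ltn_ord j)).
  move=> [[e _] nB]; split => //; rewrite /E /= e /max_upto ltNge.
  apply/negP => /bigmax_leP [_ H]; apply: nB; split => // j jm.
  exact: (H (Ordinal jm) isT).
have mA : forall m, measurable (A m).
  move=> m; apply: (@mBasic _ _ _ _ _ _ hN hX); exact: mUle.
have mB : forall m, measurable (B m).
  move=> m; apply: (@mBasic _ _ _ _ _ _ hN hX); exact: mUle.
have m0 : measurable (N i @^-1` [set 0%N] `&` E).
  rewrite e0; apply: measurableI => //; apply: (@mpre _ _ _ _ _ hX); exact: mUgt.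
have mS : forall m, measurable (N i @^-1` [set m.+1] `&` E).
  move=> m; rewrite eS; exact: measurableD.
split; first exact: block_meas m0 mS.
have p1 : `|1 - p| < 1.
  case/andP: hp => p0 p1.
  by rewrite ger0_norm ?subr_ge0 // ltrBlDr ltrDl.
apply: (@block_gen _ _ _ P _ N X _ s _ pNd i E hN hX mUle
          (fun m => p * (1 - p) ^+ m - p * s * ((1 - p) * s) ^+ m)) => //.
- move=> Z K mZ HZ m; rewrite eS.
  have -> : Z `&` (A m `\` B m) = (Z `&` A m) `\` (Z `&` B m).
    apply/seteqP; split => w /=.
      by move=> [zw [aw nbw]]; split => // -[_ bw].
    by move=> [[zw aw] nb]; split => //; split => // bw; apply: nb.
  have hD : P ((Z `&` A m) `\` (Z `&` B m)) =
      (P (Z `&` A m) - P ((Z `&` A m) `&` (Z `&` B m)))%E.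
    apply: measureD; [exact: measurableI|exact: measurableI|].
    apply: (le_lt_trans (probability_le1 P _)); [exact: measurableI | exact: ltry].
  rewrite hD.
  have -> : (Z `&` A m) `&` (Z `&` B m) = Z `&` B m.
    apply/seteqP; split => w /=; first by move=> [_ ?].
    move=> [zw [e bw]]; split => //; split => //; split => // j /=.
  rewrite !HZ -EFinB; congr EFin.
  by rewrite /pNd expr0 exprMn exprS; ring.
- have -> : series (fun m => p * (1 - p) ^+ m - p * s * ((1 - p) * s) ^+ m) =
    series (fun m => p * (1 - p) ^+ m) - series (fun m => p * s * ((1 - p) * s) ^+ m).
    by apply/funext => n; rewrite /series /= sumrB.
  have -> : 1 - p * s / (1 - (1 - p) * s) =
     p / (1 - (1 - p)) - p * s / (1 - (1 - p) * s).
    congr (_ - _); rewrite (_ : 1 - (1 - p) = p); last by ring.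
    by rewrite divff // gt_eqF //; case/andP: hp.
  apply: cvgB; [exact: (geo _ _ p1) | exact: (geo _ _ abs_lt1)].
Qed.
End Spec.
Lemma alg_min (R : realType) (a b al S : R) : 1 - b != 0 -> S = (a - b) / (1 - b) ->
  1 - (1 - al) * S != 0 ->
  al * S / (1 - (1 - al) * S) = al * (a - b) / (1 - al * b - (1 - al) * a).
Proof.
move=> hb hS hd.
have den : 1 - al * b - (1 - al) * a = (1 - b) * (1 - (1 - al) * S).
  by rewrite hS; field.
rewrite den hS; field; rewrite hb /=.
have -> : 1 - b - (1 - al) * (a - b) = (1 - b) * (1 - (1 - al) * S) by rewrite hS; field.
by rewrite mulf_neq0.
Qed.

Lemma alg_max (R : realType) (a b al S : R) : 1 - b != 0 -> S = (a - b) / (1 - b) ->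
  1 < al -> 0 <= S ->
  1 - al^-1 * (1 - S) / (1 - (1 - al^-1) * (1 - S)) =
  al * (a - b) / (1 - al * b - (1 - al) * a).
Proof.
move=> hb hS a1 S0.
have al0 : al != 0 by rewrite gt_eqF //; lra.
have hd : 1 + (al - 1) * S != 0.
  by rewrite gt_eqF //; nra.
have e1 : 1 - (1 - al^-1) * (1 - S) = (1 + (al - 1) * S) / al.
  by field.
rewrite e1.
have den : 1 - al * b - (1 - al) * a = (1 - b) * (1 + (al - 1) * S).
  by rewrite hS; field.
rewrite den hS; field; rewrite hb al0 /= andbT.
have -> : 1 - b + (al - 1) * (a - b) = (1 - b) * (1 + (al - 1) * S) by rewrite hS; field.
by rewrite mulf_neq0.
Qed.
Lemma expR_neq1 (R : realType) (lambda : R) : lambda != 0 -> 1 - expR (- lambda) != 0.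
Proof.
move=> l0; rewrite subr_eq0; apply/eqP => /esym e.
have : - lambda = 0 by apply: expR_inj; rewrite expR0.
by move/eqP; rewrite oppr_eq0 (negbTE l0).
Qed.

Theorem proposition1 (R : realType) (d : measure_display) (Omega : measurableType d)
  (P : probability Omega R) (G : R -> R) (theta : nat) (htheta : (0 < theta)%N)
  (lambda p : R) (N : 'I_theta -> Omega -> nat) (X : 'I_theta -> nat -> Omega -> R) :
  is_cdf G -> lambda != 0 ->
  0 < p <= 1 ->
  (forall i (n : nat), measurable (N i @^-1` [set n])) ->
  (forall i j, measurable_fun setT (X i j)) ->
  (forall i (n : nat), P (N i @^-1` [set n.+1]) = (p * (1 - p) ^+ n)%:E) ->
  (forall i j (t : R), P [set w | t < X i j w] = (PG_surv G lambda t)%:E) ->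
  mutually_independent P
    (fun k : 'I_theta + ('I_theta * nat) =>
       match k with
       | inl i => events_nat (N i)
       | inr ij => events_real (X ij.1 ij.2)
       end) ->
  let i0 := Ordinal htheta in
  let W := fun i w => min_upto (fun j => X i j w) (N i w) in
  let V := fun i w => max_upto (fun j => X i j w) (N i w) in
  (forall alpha : R, 0 < alpha <= 1 -> p = alpha ->
     forall t : R,
       P [set w | t < \big[Num.min/W i0 w]_(i < theta) W i w]
       = (GMOP_surv G theta alpha lambda t)%:E) /\
  (forall alpha : R, 1 < alpha -> p = alpha^-1 ->
     forall t : R,
       P [set w | t < \big[Num.min/V i0 w]_(i < theta) V i w]
       = (GMOP_surv G theta alpha lambda t)%:E).
Proof.
move=> _ l0 hp hN hX hNv hXv indep i0 W V.
have indep' : mutually_independent P (Fam N X) := indep.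
have p0 : 0 < p by case/andP: hp.
have p1 : `|1 - p| < 1.
  by rewrite ger0_norm ?subr_ge0 ?ltrBlDr ?ltrDl //; case/andP: hp.
have hP0 : forall i, P (N i @^-1` [set 0%N]) = 0%:E.
  move=> i.
  have mB : measurable (\bigcup_m N i @^-1` [set m.+1]).
    by apply: bigcupT_measurable => m.
  have h1 : P (\bigcup_m N i @^-1` [set m.+1]) = 1%:E.
    apply: (@series_meas _ _ _ P _ (fun m => p * (1 - p) ^+ m)) => //.
    - move=> m n _ _ [w [/= e1 e2]]; move: e1; rewrite e2; by case.
    - have e : p / (1 - (1 - p)) = 1.
        by rewrite (_ : 1 - (1 - p) = p) ?divff ?gt_eqF //; ring.
      by have := @geo _ p (1 - p) p1; rewrite e.
  have h2 : P [set: Omega] = (P (N i @^-1` [set 0%N]) + P (\bigcup_m N i @^-1` [set m.+1]))%E.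
    have -> : [set: Omega] = N i @^-1` [set 0%N] `|` \bigcup_m N i @^-1` [set m.+1].
      apply/seteqP; split => w //= _.
      by case e : (N i w) => [|m]; [left | right; exists m].
    apply: measureU => //.
    apply/seteqP; split => w //= [e [m _ e']]; move: e; by rewrite e'.
  move: h2; rewrite probability_setT h1.
  move: (measure_ge0 P (N i @^-1` [set 0%N])).
  case: (P _) => [r| |] //= r0 /eqP; rewrite -EFinD eqe => /eqP h.
  congr EFin; lra.
have hpN : forall i a, P (N i @^-1` [set a]) = (pNd _ p a)%:E.
  by move=> i [|a] /=; [exact: hP0 | exact: hNv].
have b1 := @expR_neq1 _ _ l0.
split.
- move=> alpha ha pa t.
  pose S := PG_surv G lambda t.
  have hS : forall i j, P (X i j @^-1` [set x | t < x]) = S%:E.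
    by move=> i j; exact: hXv.
  have S01 : 0 <= S <= 1.
    have m0 : measurable (X i0 0%N @^-1` [set x | t < x]).
      by apply: (@mpre _ _ _ _ _ hX); exact: mUgt.
    pose A := X i0 0%N @^-1` [set x | t < x].
    have g0 : (0 <= P A)%E := measure_ge0 P _.
    have g1 : (P A <= 1)%E := probability_le1 P m0.
    by move: g0 g1; rewrite hS !lee_fin => -> ->.
  pose E i := [set w | t < min_upto (fun j => X i j w) (N i w)].
  have -> : [set w | t < \big[Num.min/W i0 w]_(i < theta) W i w] =
            \bigcap_(i in [set: 'I_theta]) E i.
    apply/seteqP; split => w /=.
      by move=> /bigmin_gtP [_ H] i _; apply: H.
    move=> H; apply/bigmin_gtP; split; first exact: H.
    by move=> i _; apply: H.
  rewrite (@Lall _ _ _ P theta N X indep' hN hX [set x | t < x] S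
     (p * S / (1 - (1 - p) * S)) (pNd _ p) E (mUgt _ t) hS hpN).
  + congr EFin; rewrite /GMOP_surv; congr (_ ^+ _).
    rewrite -pa; apply: (@alg_min _ _ (expR (- lambda))) => //.
    case/andP: S01 => S0 S1; case/andP: hp => _ hp1.
    rewrite gt_eqF //; nra.
  + by move=> i; case: (@min_block _ _ _ P _ _ _ hN hX t S p hp S01 i).
  + by move=> i; case: (@min_block _ _ _ P _ _ _ hN hX t S p hp S01 i).
- move=> alpha ha pa t.
  pose S := PG_surv G lambda t.
  have hS : forall i j, P (X i j @^-1` [set x | t < x]) = S%:E.
    by move=> i j; exact: hXv.
  have S01 : 0 <= S <= 1.
    have m0 : measurable (X i0 0%N @^-1` [set x | t < x]).
      by apply: (@mpre _ _ _ _ _ hX); exact: mUgt.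
    pose A := X i0 0%N @^-1` [set x | t < x].
    have g0 : (0 <= P A)%E := measure_ge0 P _.
    have g1 : (P A <= 1)%E := probability_le1 P m0.
    by move: g0 g1; rewrite hS !lee_fin => -> ->.
  have hF : forall i j, P (X i j @^-1` [set x | x <= t]) = (1 - S)%:E.
    move=> i j.
    have mA : measurable (X i j @^-1` [set x | t < x]).
      by apply: (@mpre _ _ _ _ _ hX); exact: mUgt.
    have -> : X i j @^-1` [set x | x <= t] = ~` (X i j @^-1` [set x | t < x]).
      apply/seteqP; split => w /= H.
        by rewrite leNgt in H; apply/negP.
      by rewrite leNgt; apply/negP.
    pose A := X i j @^-1` [set x | t < x].
    have h : P (~` A) = (1 - P A)%E := probability_setC P mA.
    by rewrite h hS -EFinB.
  have F01 : 0 <= 1 - S <= 1.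
    by case/andP: S01 => S0 S1; apply/andP; split; lra.
  pose E i := [set w | t < max_upto (fun j => X i j w) (N i w)].
  have -> : [set w | t < \big[Num.min/V i0 w]_(i < theta) V i w] =
            \bigcap_(i in [set: 'I_theta]) E i.
    apply/seteqP; split => w /=.
      by move=> /bigmin_gtP [_ H] i _; apply: H.
    move=> H; apply/bigmin_gtP; split; first exact: H.
    by move=> i _; apply: H.
  rewrite (@Lall _ _ _ P theta N X indep' hN hX [set x | x <= t] (1 - S)
     (1 - p * (1 - S) / (1 - (1 - p) * (1 - S))) (pNd _ p) E (mUle _ t) hF hpN).
  + congr EFin; rewrite /GMOP_surv; congr (_ ^+ _).
    rewrite pa; apply: (@alg_max _ _ (expR (- lambda))) => //.
    by case/andP: S01.
  + by move=> i; case: (@max_block _ _ _ P _ _ _ hN hX t (1 - S) p hp F01 i).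
  + by move=> i; case: (@max_block _ _ _ P _ _ _ hN hX t (1 - S) p hp F01 i).
Qed.
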